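(* Let $\theta_T=\sqrt{4T^{-1}\log\mu(V)}$. For any nonempty starting set $S_0\subseteq V$, any integer $T\geq 1$ and any constant $c>0$, the volume-biased evolving set process $(S_t)$ started from $S_0$ satisfies \[ \widehat{\mathbf P}_{S_0}\Big[\min_{0\le j<T}\phi(S_j)\leq \sqrt{c}\,\theta_T\Big] \geq 1-\frac1c. \]
   Context: Let $G=(V,E)$ be a finite simple undirected graph in which every vertex has positive degree $d(x)$. For $S\subseteq V$, $\mu(S)=\sum_{x\in S}d(x)$, $\partial(S)$ is the number of edges with exactly one endpoint in $S$, and $\phi(S)=\partial(S)/\mu(S)$. $\log$ is the natural logarithm. The lazy random walk has transition kernel $p(x,y)=1/(2d(x))$ if $\{x,y\}\in E$, $p(x,x)=1/2$, and $0$ otherwise; $p(x,S)=\sum_{y\in S}p(x,y)$. The evolving set process (ESP): from state $S$, pick $U$ uniform on $[0,1]$ and move to $\{y: p(y,S)\geq U\}$; $K(S,S')$ denotes its transition kernel. The volume-biased ESP is the Markov chain on nonempty subsets with kernel $\widehat K(S,S')=\frac{\mu(S')}{\mu(S)}K(S,S')$; $\widehat{\mathbf P}_{S_0}$ denotes its law started at $S_0$. *)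

(* Defs.v *)
From mathcomp Require Import all_boot.
From Stdlib Require Import Reals.

Set Implicit Arguments.
Unset Strict Implicit.
Unset Printing Implicit Defensive.

Local Open Scope R_scope.

Definition Rleb (x y : R) : bool := if Rle_dec x y then true else false.

(* Graph: simple undirected graph = symmetric irreflexive relation e on a finType V *)
Definition deg (V : finType) (e : rel V) (x : V) : nat := #|[set y | e x y]|.

Definition vol (V : finType) (e : rel V) (S : {set V}) : R :=
  \big[Rplus/0]_(x in S) INR (deg e x).

(* boundary: number of edges with exactly one endpoint in S
   (each such edge {x,y} counted once, oriented with x in S, y not in S) *)
Definition bdry (V : finType) (e : rel V) (S : {set V}) : R :=
  INR #|[set p : V * V | [&& e p.1 p.2, p.1 \in S & p.2 \notin S]]|.

Definition cond (V : finType) (e : rel V) (S : {set V}) : R :=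
  bdry e S / vol e S.

Definition ptrans (V : finType) (e : rel V) (x y : V) : R :=
  if x == y then / 2
  else if e x y then / (2 * INR (deg e x)) else 0.

Definition pS (V : finType) (e : rel V) (x : V) (S : {set V}) : R :=
  \big[Rplus/0]_(y in S) ptrans e x y.

(* One step of the ESP given the uniform variable U *)
Definition esp_step (V : finType) (e : rel V) (S : {set V}) (U : R) : {set V} :=
  [set y | Rleb U (pS e y S)].

(* K(S,S') = Lebesgue measure of {U in [0,1] : esp_step S U = S'}.
   esp_step S U = S' iff  max_{y notin S'} p(y,S) < U <= min_{y in S'} p(y,S),
   so the measure is max(0, min(1, min_{S'} p) - max(0, max_{not S'} p)). *)
Definition esp_K (V : finType) (e : rel V) (S S' : {set V}) : R :=
  Rmax 0 (\big[Rmin/1]_(y in S') pS e y S - \big[Rmax/0]_(y in ~: S') pS e y S).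

Definition esp_Khat (V : finType) (e : rel V) (S S' : {set V}) : R :=
  vol e S' / vol e S * esp_K e S S'.

(* Law of the first n states (S_0, ..., S_{n-1}) of the volume-biased ESP
   started at S0: probability of the trajectory s. *)
Definition traj_weight (V : finType) (e : rel V) (S0 : {set V}) (n : nat)
    (s : n.-tuple {set V}) : R :=
  (if nth set0 s 0 == S0 then 1 else 0) *
  \big[Rmult/1]_(0 <= i < n.-1) esp_Khat e (nth set0 s i) (nth set0 s i.+1).

Definition esp_hit_prob (V : finType) (e : rel V) (S0 : {set V}) (n : nat) (a : R) : R :=
  \big[Rplus/0]_(s : n.-tuple {set V})
     (if [exists i : 'I_n, Rleb (cond e (nth set0 s i)) a]
      then traj_weight e S0 s else 0).

Definition theta (V : finType) (e : rel V) (T : nat) : R :=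
  sqrt (4 * / INR T * ln (vol e [set: V])).

(* Main.v *)
From HB Require Import structures.
Require Import Defs.
From mathcomp Require Import all_boot.
From Stdlib Require Import Reals Lra Psatz.
Set Implicit Arguments.
Unset Strict Implicit.
Local Open Scope R_scope.

HB.instance Definition _ := Monoid.isComLaw.Build R 0 Rplus (fun x y z => esym (Rplus_assoc x y z)) Rplus_comm Rplus_0_l.
Definition Rmin_AC x y z := esym (Rmin_assoc x y z).
Definition Rmax_AC x y z := esym (Rmax_assoc x y z).
HB.instance Definition _ := SemiGroup.isComLaw.Build R Rmin Rmin_assoc Rmin_comm.
HB.instance Definition _ := SemiGroup.isComLaw.Build R Rmax Rmax_assoc Rmax_comm.

Lemma big_setU1_AC (op : SemiGroup.com_law R) (idx : R) (V : finType) (x : V) (A : {set V}) F :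
  x \notin A -> \big[op/idx]_(i in x |: A) F i = op (F x) (\big[op/idx]_(i in A) F i).
Proof.
move=> xA; rewrite -!big_enum.
rewrite (@perm_big _ op idx _ (enum (x |: A)) (x :: enum A)) ?big_cons //.
apply: uniq_perm; first exact: enum_uniq.
  by rewrite /= mem_enum xA enum_uniq.
by move=> y; rewrite mem_enum !inE mem_enum.
Qed.

Lemma bigmin_idx (V : finType) (A : {set V}) F r r0 : r <= r0 ->
  \big[Rmin/r]_(i in A) F i = Rmin r (\big[Rmin/r0]_(i in A) F i).
Proof.
move=> h; elim/big_rec2: _ => [|i y1 y2 _ ->].
  by rewrite Rmin_left.
by rewrite !Rmin_assoc (Rmin_comm (F i)).
Qed.

Lemma bigmax_idx (V : finType) (A : {set V}) F r r0 : r0 <= r ->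
  \big[Rmax/r]_(i in A) F i = Rmax r (\big[Rmax/r0]_(i in A) F i).
Proof.
move=> h; elim/big_rec2: _ => [|i y1 y2 _ ->].
  by rewrite Rmax_left.
by rewrite !Rmax_assoc (Rmax_comm (F i)).
Qed.

Lemma bigmin_le_idx (V : finType) (A : {set V}) F r :
  \big[Rmin/r]_(i in A) F i <= r.
Proof. elim/big_rec: _ => [|i y _ H]; [lra|]. apply: Rle_trans H; apply: Rmin_r. Qed.

Lemma bigmax_ge_idx (V : finType) (A : {set V}) F r :
  r <= \big[Rmax/r]_(i in A) F i.
Proof. elim/big_rec: _ => [|i y _ H]; [lra|]. apply: Rle_trans H _; apply: Rmax_r. Qed.

Lemma bigmin_le_mem (V : finType) (A : {set V}) F r i0 : i0 \in A ->
  \big[Rmin/r]_(i in A) F i <= F i0.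
Proof.
move=> hi; rewrite -(setD1K hi) big_setU1_AC ?setD11 //; apply: Rmin_l.
Qed.

Lemma bigmax_ge_mem (V : finType) (A : {set V}) F r i0 : i0 \in A ->
  F i0 <= \big[Rmax/r]_(i in A) F i.
Proof.
move=> hi; rewrite -(setD1K hi) big_setU1_AC ?setD11 //; apply: Rmax_l.
Qed.

Lemma pair_id a b q :
  Rmax 0 (b - Rmax q a) + Rmax 0 (Rmin q b - a) = Rmax 0 (b - a).
Proof.
unfold Rmax, Rmin; repeat destruct Rle_dec; lra.
Qed.

Lemma powerset_split (V : finType) (x : V) (A : {set V}) (f : {set V} -> R) :
  x \notin A ->
  \big[Rplus/0]_(S in powerset (x |: A)) f S =
  \big[Rplus/0]_(S in powerset A) (f S + f (x |: S)).
Proof.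
move=> xA; rewrite big_split /= (@bigID _ _ Rplus _ (index_enum _) (fun S : {set V} => x \in S) (fun S => S \in powerset (x |: A)) f) /= Rplus_comm.
congr (_ + _).
  apply: eq_bigl => S; rewrite !powersetE -(setU1K xA) subsetD1 setU1K //.
rewrite (reindex_onto (fun S => x |: S) (fun S => S :\ x)) /=; last first.
  by move=> S /andP [_ hS]; rewrite setD1K.
apply: eq_bigl => S; rewrite !powersetE setU11 andbT.
apply/idP/idP.
  case/andP=> h1 /eqP h2.
  have xS : x \notin S by rewrite -h2 setD11.
  by rewrite -h2 -(setU1K xA); apply: setSD.
move=> h; have xS : x \notin S by apply/negP => /(subsetP h); rewrite (negbTE xA).
by rewrite setU1K // eqxx andbT setUS.
Qed.

Definition mw (V : finType) (q : V -> R) (l r : R) (A S : {set V}) : R :=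
  Rmax 0 (\big[Rmin/r]_(y in S) q y - \big[Rmax/l]_(y in A :\: S) q y).

Lemma layer_seq (V : finType) (q : V -> R) l r (s : seq V) : uniq s ->
  \big[Rplus/0]_(S in powerset [set y in s]) mw q l r [set y in s] S = Rmax 0 (r - l).
Proof.
elim: s => [|x s IH] /=.
  move=> _; have -> : [set y in [::]] = set0 :> {set V} by apply/setP=> y; rewrite !inE.
  rewrite powerset0 big_set1 /mw setD0 !big_set0 //.
case/andP=> xs us.
have -> : [set y in x :: s] = x |: [set y in s] by apply/setP=> y; rewrite !inE.
have xA : x \notin [set y in s] by rewrite inE.
rewrite powerset_split // -(IH us); apply: eq_bigr => S.
rewrite powersetE => hS.
have xS : x \notin S by apply/negP => /(subsetP hS); rewrite (negbTE xA).
rewrite /mw.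
have -> : (x |: [set y in s]) :\: S = x |: ([set y in s] :\: S).
  apply/setP=> y; rewrite !inE; case: (eqVneq y x) => [->|] //=; by rewrite (negbTE xS).
have -> : (x |: [set y in s]) :\: (x |: S) = [set y in s] :\: S.
  apply/setP=> y; rewrite !inE; case: (eqVneq y x) => [->|] //=; by rewrite (negbTE xs) andbF.
rewrite big_setU1_AC; last by rewrite !inE (negbTE xs) andbF.
rewrite (big_setU1_AC _ _ _ xS).
exact: pair_id.
Qed.

Lemma layer (V : finType) (q : V -> R) l r :
  \big[Rplus/0]_(S : {set V}) Rmax 0 (\big[Rmin/r]_(y in S) q y - \big[Rmax/l]_(y in ~: S) q y)
   = Rmax 0 (r - l).
Proof.
rewrite -(layer_seq q l r (enum_uniq V)).
have -> : [set y in enum V] = setT by apply/setP=> y; rewrite !inE mem_enum.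
rewrite powersetT; apply: eq_big => S //; first by rewrite !inE.
by rewrite /mw setTD.
Qed.

Lemma sum_mulr (I : Type) (r : seq I) (P : pred I) (F : I -> R) c :
  c * \big[Rplus/0]_(i <- r | P i) F i = \big[Rplus/0]_(i <- r | P i) (c * F i).
Proof. elim/big_rec2: _ => [|i y1 y2 _ <-]; ring. Qed.

Lemma sum_mull (I : Type) (r : seq I) (P : pred I) (F : I -> R) c :
  \big[Rplus/0]_(i <- r | P i) F i * c = \big[Rplus/0]_(i <- r | P i) (F i * c).
Proof. elim/big_rec2: _ => [|i y1 y2 _ <-]; ring. Qed.

Definition mK (V : finType) (q : V -> R) l r (S : {set V}) :=
  Rmax 0 (\big[Rmin/r]_(y in S) q y - \big[Rmax/l]_(y in ~: S) q y).

Lemma moment_y (V : finType) (q : V -> R) l r y :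
  \big[Rplus/0]_(S : {set V}) (mK q l r S * (if y \in S then 1 else 0))
   = Rmax 0 (Rmin r (q y) - l).
Proof.
rewrite -(layer q l); apply: eq_bigr => S _; rewrite /mK.
case: ifP => yS.
  rewrite Rmult_1_r (bigmin_idx _ _ (Rmin_l r (q y))).
  rewrite Rmin_right //; apply: Rmin_glb; [apply: bigmin_le_idx | exact: bigmin_le_mem].
rewrite Rmult_0_r Rmax_left //.
have h1 := bigmin_le_idx S q (Rmin r (q y)).
have h2 : q y <= \big[Rmax/l]_(y0 in ~: S) q y0 by apply: bigmax_ge_mem; rewrite inE yS.
have h3 := Rmin_r r (q y). lra.
Qed.

Lemma vol_ind (V : finType) (e : rel V) (S : {set V}) :
  vol e S = \big[Rplus/0]_y (INR (deg e y) * (if y \in S then 1 else 0)).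
Proof.
rewrite /vol big_mkcond; apply: eq_bigr => y _; case: ifP => _; ring.
Qed.

Lemma moment_vol (V : finType) (e : rel V) (q : V -> R) l r :
  \big[Rplus/0]_(S : {set V}) (mK q l r S * vol e S)
   = \big[Rplus/0]_y (INR (deg e y) * Rmax 0 (Rmin r (q y) - l)).
Proof.
transitivity (\big[Rplus/0]_(S : {set V}) \big[Rplus/0]_y
   (mK q l r S * (INR (deg e y) * (if y \in S then 1 else 0)))).
  by apply: eq_bigr => S _; rewrite vol_ind sum_mulr.
rewrite exchange_big /=; apply: eq_bigr => y _.
rewrite -moment_y sum_mulr; apply: eq_bigr => S _; ring.
Qed.

Lemma INR_card (V : finType) (A : {pred V}) :
  INR #|A| = \big[Rplus/0]_(x in A) 1.
Proof.
rewrite -sum1_card (big_morph INR (fun a b => plus_INR a b) (erefl (INR 0))).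
by [].
Qed.

Definition NS (V : finType) (e : rel V) (S : {set V}) (y : V) : R :=
  \big[Rplus/0]_(x in S) (if e y x then 1 else 0).

Lemma deg_sum (V : finType) (e : rel V) y :
  INR (deg e y) = \big[Rplus/0]_x (if e y x then 1 else 0).
Proof.
rewrite /deg INR_card big_mkcond; apply: eq_bigr => x _; by rewrite inE.
Qed.

Lemma NS_bounds (V : finType) (e : rel V) S y :
  0 <= NS e S y <= INR (deg e y).
Proof.
rewrite deg_sum /NS; split.
  elim/big_rec: _ => [|i z _ H]; [lra|]; case: ifP => _; lra.
rewrite [in X in _ <= X](bigID (fun x => x \in S)) /=.
have : 0 <= \big[Rplus/0]_(i | i \notin S) (if e y i then 1 else 0).
  elim/big_rec: _ => [|i z _ H]; [lra|]; case: ifP => _; lra.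
lra.
Qed.

Lemma pS_formula (V : finType) (e : rel V) (eirr : irreflexive e) S y :
  pS e y S = (if y \in S then / 2 else 0) + NS e S y * / (2 * INR (deg e y)).
Proof.
rewrite /pS /NS sum_mull.
have -> : \big[Rplus/0]_(x in S) ptrans e y x =
  \big[Rplus/0]_(x in S) ((if y == x then / 2 else 0) + (if e y x then 1 else 0) * / (2 * INR (deg e y))).
  apply: eq_bigr => x _; rewrite /ptrans; case: eqP => [<-|_]; first by rewrite eirr; ring.
  case: ifP => _; ring.
rewrite big_split /=; congr (_ + _).
case: ifP => yS.
  rewrite (bigD1 y yS) eqxx big1 /=; first by rewrite Rplus_0_r.
  move=> x /andP [_ hx].
  by rewrite eq_sym (negbTE hx).
rewrite big1 // => x xS; case: eqP => // hx; by rewrite hx xS in yS.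
Qed.

Lemma q_deg (V : finType) (e : rel V) (eirr : irreflexive e)
  (hdeg : forall x : V, leq 1 (deg e x)) (S : {set V}) y :
  INR (deg e y) * pS e y S = (if y \in S then INR (deg e y) / 2 else 0) + NS e S y / 2.
Proof.
have hd : 0 < INR (deg e y) by apply: lt_0_INR; apply/ltP; exact: hdeg.
rewrite pS_formula //; case: ifP => _; field; lra.
Qed.

Lemma sumNS (V : finType) (e : rel V) (esym : symmetric e) (S : {set V}) :
  \big[Rplus/0]_y NS e S y = vol e S.
Proof.
rewrite /NS /vol exchange_big /=; apply: eq_bigr => x _.
by rewrite deg_sum; apply: eq_bigr => y _; rewrite esym.
Qed.

Lemma sumNS_out (V : finType) (e : rel V) (esym : symmetric e) (S : {set V}) :
  \big[Rplus/0]_y (if y \in S then 0 else NS e S y) = bdry e S.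
Proof.
rewrite /bdry INR_card [RHS]big_mkcond /=.
transitivity (\big[Rplus/0]_x \big[Rplus/0]_y (if [&& e x y, x \in S & y \notin S] then 1 else 0)); last first.
  rewrite pair_bigA /=; apply: eq_bigr => [[x y]] _; by rewrite !inE.
rewrite exchange_big /=; apply: eq_bigr => y _.
rewrite /NS big_mkcond /=.
case: ifP => yS.
  by rewrite big1 // => x _; rewrite !andbF.
apply: eq_bigr => x _; rewrite andbT (esym x y).
by case: (x \in S); case: (e y x).
Qed.

Lemma q_bounds (V : finType) (e : rel V) (eirr : irreflexive e)
  (hdeg : forall x : V, leq 1 (deg e x)) (S : {set V}) y :
  0 <= pS e y S <= 1 /\ (y \in S -> / 2 <= pS e y S) /\ (y \notin S -> pS e y S <= / 2).
Proof.
have hd : 0 < INR (deg e y) by apply: lt_0_INR; apply/ltP; exact: hdeg.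
have [hN1 hN2] := NS_bounds e S y.
have h0 : 0 <= NS e S y * / (2 * INR (deg e y)).
  apply: Rmult_le_pos => //; apply: Rlt_le; apply: Rinv_0_lt_compat; lra.
have h1 : NS e S y * / (2 * INR (deg e y)) <= / 2.
  apply: (Rmult_le_reg_l (2 * INR (deg e y))); first lra.
  rewrite -Rmult_assoc (Rmult_comm _ (NS e S y)) Rmult_assoc Rinv_r; last lra.
  have -> : 2 * INR (deg e y) * / 2 = INR (deg e y) by field.
  lra.
rewrite pS_formula //; case: ifP => yS; split; try split; try lra; move=> //.
Qed.

Lemma sum_half_vol (V : finType) (e : rel V) (S : {set V}) :
  \big[Rplus/0]_y (if y \in S then INR (deg e y) / 2 else 0) = vol e S / 2.
Proof.
rewrite vol_ind /Rdiv sum_mull; apply: eq_bigr => y _; case: ifP => _; ring.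
Qed.

Definition qf (V : finType) (e : rel V) (S : {set V}) := fun y => pS e y S.

Lemma K_is_mK (V : finType) (e : rel V) (S S' : {set V}) :
  esp_K e S S' = mK (qf e S) 0 1 S'.
Proof. by []. Qed.

Lemma K_split (V : finType) (e : rel V) (S S' : {set V}) :
  esp_K e S S' = mK (qf e S) 0 (/ 2) S' + mK (qf e S) (/ 2) 1 S'.
Proof.
rewrite K_is_mK /mK (bigmin_idx _ _ (r := / 2) (r0 := 1)); last lra.
rewrite (bigmax_idx _ _ (r := / 2) (r0 := 0)); last lra.
by rewrite Rplus_comm pair_id.
Qed.

Lemma Kmass (V : finType) (e : rel V) (S : {set V}) l r :
  \big[Rplus/0]_S' mK (qf e S) l r S' = Rmax 0 (r - l).
Proof. exact: layer. Qed.

Lemma Kvol (V : finType) (e : rel V) (esym : symmetric e) (eirr : irreflexive e)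
  (hdeg : forall x : V, leq 1 (deg e x)) (S : {set V}) :
  \big[Rplus/0]_S' (mK (qf e S) 0 1 S' * vol e S') = vol e S.
Proof.
rewrite moment_vol.
transitivity (\big[Rplus/0]_y ((if y \in S then INR (deg e y) / 2 else 0) + NS e S y / 2)).
  apply: eq_bigr => y _; rewrite -q_deg //; congr (_ * _).
  have [[h1 h2] _] := q_bounds eirr hdeg S y.
  rewrite /qf Rmin_right // Rminus_0_r Rmax_right //.
rewrite big_split /= sum_half_vol /Rdiv -sum_mull sumNS //; field.
Qed.

Lemma Kvol_low (V : finType) (e : rel V) (esym : symmetric e) (eirr : irreflexive e)
  (hdeg : forall x : V, leq 1 (deg e x)) (S : {set V}) :
  \big[Rplus/0]_S' (mK (qf e S) 0 (/ 2) S' * vol e S') = (vol e S + bdry e S) / 2.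
Proof.
rewrite moment_vol.
transitivity (\big[Rplus/0]_y ((if y \in S then INR (deg e y) / 2 else 0) +
                 (if y \in S then 0 else NS e S y) / 2)).
  apply: eq_bigr => y _.
  have [[h1 h2] [h3 h4]] := q_bounds eirr hdeg S y.
  rewrite /qf Rminus_0_r; case: ifP => yS.
    rewrite Rmin_left ?Rmax_right; [|lra|auto]. field.
  rewrite Rmin_right ?Rmax_right; [|lra|apply: h4; rewrite yS //].
  have := q_deg eirr hdeg S y; rewrite yS => ->; ring.
rewrite big_split /= sum_half_vol /Rdiv -sum_mull sumNS_out //; field.
Qed.

Lemma sum_nonneg (I : Type) (r : seq I) (P : pred I) (F : I -> R) :
  (forall i, P i -> 0 <= F i) -> 0 <= \big[Rplus/0]_(i <- r | P i) F i.
Proof. move=> h; elim/big_rec: _ => [|i y Pi H]; [lra|]; have := h i Pi; lra. Qed.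

Lemma sum_le (I : Type) (r : seq I) (P : pred I) (F G : I -> R) :
  (forall i, P i -> F i <= G i) ->
  \big[Rplus/0]_(i <- r | P i) F i <= \big[Rplus/0]_(i <- r | P i) G i.
Proof. move=> h; elim/big_rec2: _ => [|i y1 y2 Pi H]; [lra|]; have := h i Pi; lra. Qed.

Lemma sqrt_amgm x t : 0 <= x -> 0 < t -> sqrt x <= (x / t + t) / 2.
Proof.
move=> hx ht; have hs := sqrt_sqrt x hx; have hp := sqrt_pos x.
have h := Rle_0_sqr (sqrt x - t); rewrite /Rsqr in h; apply: (Rmult_le_reg_l (2 * t)); first lra.
have -> : 2 * t * ((x / t + t) / 2) = x + t * t by field; lra.
nra.
Qed.

Lemma jensen_sqrt (I : finType) (w X : I -> R) A :
  (forall i, 0 <= w i) -> (forall i, 0 <= X i) ->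
  \big[Rplus/0]_i w i = / 2 -> \big[Rplus/0]_i (w i * X i) = A ->
  \big[Rplus/0]_i (w i * sqrt (X i)) <= sqrt (2 * A) / 2.
Proof.
move=> hw hX h1 hA.
have hA0 : 0 <= A by rewrite -hA; apply: sum_nonneg => i _; apply: Rmult_le_pos.
have key : forall t, 0 < t -> \big[Rplus/0]_i (w i * sqrt (X i)) <= (A / t + t / 2) / 2.
  move=> t ht.
  apply: (Rle_trans _ (\big[Rplus/0]_i (w i * ((X i / t + t) / 2)))).
    apply: sum_le => i _; apply: Rmult_le_compat_l => //; exact: sqrt_amgm.
  have -> : \big[Rplus/0]_i (w i * ((X i / t + t) / 2)) =
            (\big[Rplus/0]_i (w i * X i)) * (/ t / 2) + (\big[Rplus/0]_i w i) * (t / 2).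
    rewrite !sum_mull -big_split /=; apply: eq_bigr => i _; field; lra.
  rewrite h1 hA; apply: Req_le; field; lra.
have [hApos|hAz] := Rle_lt_or_eq_dec 0 A hA0.
  have hu : 0 < sqrt (2 * A) by apply: sqrt_lt_R0; lra.
  have hs := sqrt_sqrt (2 * A) ltac:(lra).
  apply: Rle_trans (key _ hu) _; apply: Req_le.
  move: hu hs; set u := sqrt (2 * A) => hu hs.
  have -> : A = u * u / 2 by lra.
  field; lra.
rewrite -hAz Rmult_0_r sqrt_0.
set s := \big[Rplus/0]_i (w i * sqrt (X i)) in key *.
have [hs|hs] := Rle_lt_dec s 0; first lra.
have := key (2 * s) ltac:(lra).
rewrite -hAz; have -> : (0 / (2 * s) + 2 * s / 2) / 2 = s / 2 by field; lra.
lra.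
Qed.

Lemma phi_ineq f : 0 <= f <= 1 -> (sqrt (1 + f) + sqrt (1 - f)) / 2 <= 1 - f * f / 8.
Proof.
move=> [h0 h1].
set u := sqrt (1 + f); set v := sqrt (1 - f).
have hu : u * u = 1 + f by apply: sqrt_sqrt; lra.
have hv : v * v = 1 - f by apply: sqrt_sqrt; lra.
have u0 : 0 <= u by apply: sqrt_pos.
have v0 : 0 <= v by apply: sqrt_pos.
have hp : u * v <= 1 - f * f / 2.
  have e1 : (u * v) * (u * v) = (u * u) * (v * v) by ring.
  have hpp : (u * v) * (u * v) = 1 - f * f by rewrite e1 hu hv; ring.
  have p0 : 0 <= u * v by apply: Rmult_le_pos.
  have k0 : 0 <= 1 - f * f / 2 by nra.
  case: (Rle_lt_dec (u * v) (1 - f * f / 2)) => // H; exfalso.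
  have : (1 - f * f / 2) * (1 - f * f / 2) < (u * v) * (u * v).
    by apply: Rmult_le_0_lt_compat.
  have : 0 <= (f * f) * (f * f) by apply: Rmult_le_pos; nra.
  nra.
have hs : (u + v) * (u + v) <= 4 - f * f by nra.
have k0 : 0 <= 1 - f * f / 8 by nra.
case: (Rle_lt_dec ((u + v) / 2) (1 - f * f / 8)) => // H; exfalso.
have : (1 - f * f / 8) * (1 - f * f / 8) < ((u + v) / 2) * ((u + v) / 2).
  by apply: Rmult_le_0_lt_compat.
have : 0 <= (f * f) * (f * f) by apply: Rmult_le_pos; nra.
nra.
Qed.

Lemma ln_le_sub1 z : 0 < z -> ln z <= z - 1.
Proof. move=> hz; have := exp_ineq1_le (ln z); rewrite exp_ln //; lra. Qed.

Lemma xlnx x : 0 < x -> 2 * x - 2 * sqrt x <= x * ln x.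
Proof.
move=> hx; have hs : 0 < sqrt x by apply: sqrt_lt_R0.
have hss := sqrt_sqrt x (Rlt_le _ _ hx).
move: hs hss; set s := sqrt x => hs hss.
have hl : ln x = 2 * ln s by rewrite -hss ln_mult //; ring.
have h1 := ln_le_sub1 (Rinv_0_lt_compat _ hs).
rewrite ln_Rinv // in h1.
have h2 : s * (1 - / s) = s - 1 by field; lra.
rewrite hl -hss.
have : s * s * (2 * ln s) - (2 * (s * s) - 2 * s) = 2 * s * (s * (ln s) - (s - 1)) by ring.
have : 0 <= s * ln s - (s - 1).
  rewrite -h2; have : s * (1 - / s) <= s * ln s by apply: Rmult_le_compat_l; lra.
  lra.
move=> h3 h4; have : 0 <= 2 * s * (s * ln s - (s - 1)) by apply: Rmult_le_pos; lra.
lra.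
Qed.

Lemma vol_nonneg (V : finType) (e : rel V) (S : {set V}) : 0 <= vol e S.
Proof. apply: sum_nonneg => y _; apply: pos_INR. Qed.

Lemma mK_nonneg (V : finType) (q : V -> R) l r S : 0 <= mK q l r S.
Proof. apply: Rmax_l. Qed.

Lemma sum_div (I : finType) (F G : I -> R) c :
  \big[Rplus/0]_i (F i * (G i / c)) = (\big[Rplus/0]_i (F i * G i)) / c.
Proof. rewrite /Rdiv sum_mull; apply: eq_bigr => i _; ring. Qed.

Lemma Khat_sum (V : finType) (e : rel V) (esym : symmetric e) (eirr : irreflexive e)
  (hdeg : forall x : V, leq 1 (deg e x)) (S : {set V}) :
  0 < vol e S -> \big[Rplus/0]_S' esp_Khat e S S' = 1.
Proof.
move=> hS.
have -> : \big[Rplus/0]_S' esp_Khat e S S' = \big[Rplus/0]_S' (mK (qf e S) 0 1 S' * (vol e S' / vol e S)).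
  apply: eq_bigr => S' _; rewrite /esp_Khat K_is_mK; ring.
rewrite sum_div Kvol //; field; lra.
Qed.

Lemma sqrt_bound (V : finType) (e : rel V) (esym : symmetric e) (eirr : irreflexive e)
  (hdeg : forall x : V, leq 1 (deg e x)) (S : {set V}) :
  0 < vol e S ->
  0 <= cond e S <= 1 /\
  \big[Rplus/0]_S' (esp_K e S S' * sqrt (vol e S' / vol e S)) <= 1 - cond e S * cond e S / 8.
Proof.
move=> hS.
set X := fun S' => vol e S' / vol e S.
have hX : forall S', 0 <= X S'.
  move=> S'; rewrite /X /Rdiv; apply: Rmult_le_pos; [apply: vol_nonneg|].
  apply: Rlt_le; exact: Rinv_0_lt_compat.
have mlo : \big[Rplus/0]_S' mK (qf e S) 0 (/ 2) S' = / 2.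
  rewrite Kmass Rminus_0_r Rmax_right //; lra.
have mhi : \big[Rplus/0]_S' mK (qf e S) (/ 2) 1 S' = / 2.
  rewrite Kmass Rmax_right; lra.
have Alo : \big[Rplus/0]_S' (mK (qf e S) 0 (/ 2) S' * X S') = (1 + cond e S) / 2.
  rewrite /X sum_div Kvol_low // /cond; field; lra.
have Atot : \big[Rplus/0]_S' (mK (qf e S) 0 1 S' * X S') = 1.
  rewrite /X sum_div Kvol //; field; lra.
have Ahi : \big[Rplus/0]_S' (mK (qf e S) (/ 2) 1 S' * X S') = (1 - cond e S) / 2.
  have : \big[Rplus/0]_S' (mK (qf e S) 0 1 S' * X S') =
    \big[Rplus/0]_S' (mK (qf e S) 0 (/ 2) S' * X S') + \big[Rplus/0]_S' (mK (qf e S) (/ 2) 1 S' * X S').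
    rewrite -big_split /=; apply: eq_bigr => S' _; rewrite -K_is_mK K_split; ring.
  rewrite Atot Alo; lra.
have c0 : 0 <= cond e S.
  rewrite /cond /Rdiv; apply: Rmult_le_pos; [apply: pos_INR|apply: Rlt_le; exact: Rinv_0_lt_compat].
have c1 : cond e S <= 1.
  have : 0 <= \big[Rplus/0]_S' (mK (qf e S) (/ 2) 1 S' * X S').
    by apply: sum_nonneg => S' _; apply: Rmult_le_pos; [apply: mK_nonneg|].
  rewrite Ahi; lra.
split; first lra.
have J1 := jensen_sqrt (fun S' => mK_nonneg (qf e S) 0 (/ 2) S') hX mlo Alo.
have J2 := jensen_sqrt (fun S' => mK_nonneg (qf e S) (/ 2) 1 S') hX mhi Ahi.
have -> : \big[Rplus/0]_S' (esp_K e S S' * sqrt (vol e S' / vol e S)) =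
  \big[Rplus/0]_S' (mK (qf e S) 0 (/ 2) S' * sqrt (X S')) + \big[Rplus/0]_S' (mK (qf e S) (/ 2) 1 S' * sqrt (X S')).
  rewrite -big_split /=; apply: eq_bigr => S' _; rewrite K_split /X; ring.
have := phi_ineq (conj c0 c1).
move: J1 J2; rewrite (_ : 2 * ((1 + cond e S) / 2) = 1 + cond e S); last field.
rewrite (_ : 2 * ((1 - cond e S) / 2) = 1 - cond e S); last field.
lra.
Qed.

Lemma lin3 (I : finType) (F G : I -> R) a :
  \big[Rplus/0]_i (F i * a + 2 * F i - 2 * G i) =
  (\big[Rplus/0]_i F i) * a + 2 * (\big[Rplus/0]_i F i) - 2 * (\big[Rplus/0]_i G i).
Proof. elim/big_rec3: _ => [|i y1 y2 y3 _ ->]; ring. Qed.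

Lemma OS (V : finType) (e : rel V) (esym : symmetric e) (eirr : irreflexive e)
  (hdeg : forall x : V, leq 1 (deg e x)) (S : {set V}) :
  0 < vol e S ->
  ln (vol e S) + cond e S * cond e S / 4 <= \big[Rplus/0]_S' (esp_Khat e S S' * ln (vol e S')).
Proof.
move=> hS.
have [_ hsq] := sqrt_bound esym eirr hdeg hS.
have hsum := Khat_sum esym eirr hdeg hS.
apply: (Rle_trans _ (\big[Rplus/0]_S' (esp_Khat e S S' * ln (vol e S) + 2 * esp_Khat e S S'
           - 2 * (esp_K e S S' * sqrt (vol e S' / vol e S))))); last first.
  apply: sum_le => S' _.
  have hK : 0 <= esp_K e S S' by apply: Rmax_l.
  have [hv|hv] := Rle_lt_or_eq_dec 0 (vol e S') (vol_nonneg e S').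
    set x := vol e S' / vol e S.
    have hx : 0 < x by rewrite /x /Rdiv; apply: Rmult_lt_0_compat => //; exact: Rinv_0_lt_compat.
    have hKh : esp_Khat e S S' = x * esp_K e S S' by [].
    have hl : ln (vol e S') = ln (vol e S) + ln x.
      rewrite -ln_mult //; congr ln; rewrite /x; field; lra.
    rewrite hKh hl.
    have := xlnx hx => h.
    have : esp_K e S S' * (2 * x - 2 * sqrt x) <= esp_K e S S' * (x * ln x).
      by apply: Rmult_le_compat_l.
    move=> h2.
    have E1 : x * esp_K e S S' * (ln (vol e S) + ln x) = x * esp_K e S S' * ln (vol e S) + esp_K e S S' * (x * ln x) by ring.
    have E2 : x * esp_K e S S' * ln (vol e S) + 2 * (x * esp_K e S S') - 2 * (esp_K e S S' * sqrt x)
      = x * esp_K e S S' * ln (vol e S) + esp_K e S S' * (2 * x - 2 * sqrt x) by ring.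
    rewrite E1 E2; lra.
  have hKh : esp_Khat e S S' = 0 by rewrite /esp_Khat -hv /Rdiv !Rmult_0_l.
  rewrite hKh -hv /Rdiv !Rmult_0_l sqrt_0; lra.
rewrite lin3 hsum; lra.
Qed.

Lemma sum_tuple_cons (T : finType) n (F : n.+1.-tuple T -> R) :
  \big[Rplus/0]_(t : n.+1.-tuple T) F t =
  \big[Rplus/0]_(x : T) \big[Rplus/0]_(t : n.-tuple T) F (cons_tuple x t).
Proof.
rewrite pair_bigA /=.
rewrite (reindex (fun p : T * n.-tuple T => cons_tuple p.1 p.2)) //=.
exists (fun t : n.+1.-tuple T => (thead t, behead_tuple t)).
  by move=> [x t] _; congr pair; apply: val_inj.
by move=> t _; rewrite [in RHS](tuple_eta t); apply: val_inj.
Qed.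

Lemma sum_tuple0 (T : finType) (F : 0.-tuple T -> R) :
  \big[Rplus/0]_(t : 0.-tuple T) F t = F [tuple].
Proof.
rewrite (big_pred1 [tuple]) // => t; symmetry; apply/eqP; exact: tuple0.
Qed.

Lemma sum_delta (T : finType) (a : T) (F : T -> R) :
  \big[Rplus/0]_x ((if x == a then 1 else 0) * F x) = F a.
Proof.
rewrite (bigD1 a) //= eqxx big1 /=; first by rewrite Rplus_0_r Rmult_1_l.
by move=> x /negbTE ->; rewrite Rmult_0_l.
Qed.

Definition Pw (V : finType) (e : rel V) n (s : n.-tuple {set V}) :=
  \big[Rmult/1]_(0 <= i < n.-1) esp_Khat e (nth set0 s i) (nth set0 s i.+1).

Lemma traj_cons (V : finType) (e : rel V) n (S0 : {set V}) (F : n.+2.-tuple {set V} -> R) :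
  \big[Rplus/0]_s (traj_weight e S0 s * F s) =
  \big[Rplus/0]_S' (esp_Khat e S0 S' *
     \big[Rplus/0]_t (traj_weight e S' t * F (cons_tuple S0 t))).
Proof.
rewrite sum_tuple_cons.
have step : forall x (t : n.+1.-tuple {set V}),
  traj_weight e S0 (cons_tuple x t) =
  (if x == S0 then 1 else 0) * (esp_Khat e x (nth set0 t 0) * Pw e t).
  move=> x t; rewrite /traj_weight /Pw /= big_nat_recl //.
transitivity (\big[Rplus/0]_x ((if x == S0 then 1 else 0) *
   \big[Rplus/0]_(t : n.+1.-tuple {set V}) (esp_Khat e x (nth set0 t 0) * Pw e t * F (cons_tuple x t)))).
  apply: eq_bigr => x _; rewrite sum_mulr; apply: eq_bigr => t _; by rewrite step !Rmult_assoc.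
transitivity (\big[Rplus/0]_(t : n.+1.-tuple {set V}) (esp_Khat e S0 (nth set0 t 0) * Pw e t * F (cons_tuple S0 t))).
  exact (sum_delta S0 (fun x => \big[Rplus/0]_(t : n.+1.-tuple {set V}) (esp_Khat e x (nth set0 t 0) * Pw e t * F (cons_tuple x t)))).
transitivity (\big[Rplus/0]_(t : n.+1.-tuple {set V}) \big[Rplus/0]_S'
   ((if S' == nth set0 t 0 then 1 else 0) * (esp_Khat e S0 S' * Pw e t * F (cons_tuple S0 t)))).
  apply: eq_bigr => t _.
  symmetry; exact (sum_delta (nth set0 t 0) (fun S' => esp_Khat e S0 S' * Pw e t * F (cons_tuple S0 t))).
rewrite exchange_big /=; apply: eq_bigr => S' _; rewrite sum_mulr; apply: eq_bigr => t _.
rewrite /traj_weight -/(Pw e t) (eq_sym S'); ring.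
Qed.

Definition gq (V : finType) (e : rel V) (S : {set V}) := cond e S * cond e S / 4.
Definition Gs (V : finType) (e : rel V) n (s : n.-tuple {set V}) :=
  \big[Rplus/0]_(0 <= j < n) gq e (nth set0 s j).

Lemma vol_le_T (V : finType) (e : rel V) (S : {set V}) : vol e S <= vol e setT.
Proof.
rewrite !vol_ind; apply: sum_le => y _; rewrite inE.
have := pos_INR (deg e y); case: ifP => _; lra.
Qed.

Lemma ln_vol_le (V : finType) (e : rel V) (S : {set V}) :
  0 < vol e S -> ln (vol e S) <= ln (vol e setT).
Proof.
move=> h; have [h2|h2] := Rle_lt_or_eq_dec _ _ (vol_le_T e S).
  by apply: Rlt_le; apply: ln_increasing.
by rewrite h2; apply: Rle_refl.
Qed.

Lemma Khat_nonneg (V : finType) (e : rel V) (S S' : {set V}) : 0 <= esp_Khat e S S'.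
Proof.
rewrite /esp_Khat /Rdiv; apply: Rmult_le_pos; last exact: Rmax_l.
apply: Rmult_le_pos; first exact: vol_nonneg.
have [h|h] := Rle_lt_or_eq_dec _ _ (vol_nonneg e S).
  by apply: Rlt_le; apply: Rinv_0_lt_compat.
by rewrite -h Rinv_0; apply: Rle_refl.
Qed.

Lemma Khat_zero (V : finType) (e : rel V) (S S' : {set V}) : vol e S' = 0 -> esp_Khat e S S' = 0.
Proof. by move=> h; rewrite /esp_Khat h /Rdiv !Rmult_0_l. Qed.

Lemma Khat_cases (V : finType) (e : rel V) (S S' : {set V}) (P : R -> Prop) :
  (0 < vol e S' -> P (esp_Khat e S S')) -> P 0 -> P (esp_Khat e S S').
Proof.
move=> h1 h0; have [h|h] := Rle_lt_or_eq_dec _ _ (vol_nonneg e S'); first exact: h1.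
by rewrite Khat_zero.
Qed.

Lemma OS_L (V : finType) (e : rel V) (esym : symmetric e) (eirr : irreflexive e)
  (hdeg : forall x : V, leq 1 (deg e x)) (S : {set V}) (H : {set V} -> R) :
  0 < vol e S ->
  (forall S', 0 < vol e S' -> H S' <= ln (vol e setT) - ln (vol e S')) ->
  \big[Rplus/0]_S' (esp_Khat e S S' * H S') <= ln (vol e setT) - ln (vol e S) - gq e S.
Proof.
move=> hS hH.
have hO := OS esym eirr hdeg hS.
have hsum := Khat_sum esym eirr hdeg hS.
apply: (Rle_trans _ (\big[Rplus/0]_S' (esp_Khat e S S' * ln (vol e setT) - esp_Khat e S S' * ln (vol e S')))).
  apply: sum_le => S' _.
  have [h|h] := Rle_lt_or_eq_dec _ _ (vol_nonneg e S').
    have := hH S' h; have := Khat_nonneg e S S'; nra.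
  rewrite Khat_zero //; lra.
have -> : \big[Rplus/0]_S' (esp_Khat e S S' * ln (vol e setT) - esp_Khat e S S' * ln (vol e S'))
  = (\big[Rplus/0]_S' esp_Khat e S S') * ln (vol e setT) - \big[Rplus/0]_S' (esp_Khat e S S' * ln (vol e S')).
  elim/big_rec3: _ => [|i y1 y2 y3 _ ->]; ring.
rewrite hsum /gq; lra.
Qed.

Lemma traj (V : finType) (e : rel V) (esym : symmetric e) (eirr : irreflexive e)
  (hdeg : forall x : V, leq 1 (deg e x)) n :
  forall S0 : {set V}, 0 < vol e S0 ->
  \big[Rplus/0]_(s : n.+1.-tuple {set V}) traj_weight e S0 s = 1 /\
  \big[Rplus/0]_(s : n.+1.-tuple {set V}) (traj_weight e S0 s * Gs e s)
     <= ln (vol e setT) - ln (vol e S0).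
Proof.
elim: n => [|n IH] S0 hS0.
  rewrite !sum_tuple_cons.
  have hw : forall x, traj_weight e S0 (cons_tuple x [tuple]) = (if x == S0 then 1 else 0).
    by move=> x; rewrite /traj_weight big_geq //= Rmult_1_r.
  split.
    transitivity (\big[Rplus/0]_(x : {set V}) ((if x == S0 then 1 else 0) * 1)).
      by apply: eq_bigr => x _; rewrite sum_tuple0 hw Rmult_1_r.
    exact (sum_delta S0 (fun _ => 1)).
  have -> : \big[Rplus/0]_x \big[Rplus/0]_(t : 0.-tuple {set V}) (traj_weight e S0 (cons_tuple x t) * Gs e (cons_tuple x t)) = \big[Rplus/0]_(x : {set V}) ((if x == S0 then 1 else 0) * gq e x).
    by apply: eq_bigr => x _; rewrite sum_tuple0 hw /Gs big_nat1.
  rewrite (sum_delta S0 (gq e)).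
  have := OS_L esym eirr hdeg (H := fun _ => 0) hS0.
  have -> : \big[Rplus/0]_S' (esp_Khat e S0 S' * 0) = 0.
    by rewrite big1 // => S' _; rewrite Rmult_0_r.
  move=> h; have := h (fun S' hS' => ltac:(have := ln_vol_le hS'; lra)); lra.
split.
  transitivity (\big[Rplus/0]_(s : n.+2.-tuple {set V}) (traj_weight e S0 s * 1)).
    by apply: eq_bigr => s _; rewrite Rmult_1_r.
  rewrite traj_cons; transitivity (\big[Rplus/0]_S' esp_Khat e S0 S'); last by apply (Khat_sum esym eirr hdeg hS0).
  apply: eq_bigr => S' _.
  apply (@Khat_cases _ e S0 S' (fun k => k * \big[Rplus/0]_(t : n.+1.-tuple {set V}) (traj_weight e S' t * 1) = k)).
    move=> hS'; have [h1 _] := IH S' hS'.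
    rewrite (eq_bigr (fun t => traj_weight e S' t)); last by move=> t _; rewrite Rmult_1_r.
    by rewrite h1 Rmult_1_r.
  by rewrite Rmult_0_l.
rewrite traj_cons.
have hG : forall t : n.+1.-tuple {set V}, Gs e (cons_tuple S0 t) = gq e S0 + Gs e t.
  by move=> t; rewrite /Gs big_nat_recl.
have := OS_L esym eirr hdeg
  (H := fun S' => \big[Rplus/0]_(t : n.+1.-tuple {set V}) (traj_weight e S' t * Gs e (cons_tuple S0 t)) - gq e S0) hS0.
move=> h.
suff : \big[Rplus/0]_S' (esp_Khat e S0 S' *
   (\big[Rplus/0]_(t : n.+1.-tuple {set V}) (traj_weight e S' t * Gs e (cons_tuple S0 t)) - gq e S0)) =
   \big[Rplus/0]_S' (esp_Khat e S0 S' * \big[Rplus/0]_(t : n.+1.-tuple {set V}) (traj_weight e S' t * Gs e (cons_tuple S0 t))) - gq e S0.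
  move=> E; cbv beta in h; rewrite E in h.
  apply: (Rplus_le_reg_r (- gq e S0)).
  refine (Rle_trans _ _ _ (h _) _); last by apply: Req_le; ring.
  move=> S' hS'.
  have [h1 h2] := IH S' hS'.
  have -> : \big[Rplus/0]_(t : n.+1.-tuple {set V}) (traj_weight e S' t * Gs e (cons_tuple S0 t)) =
    gq e S0 * \big[Rplus/0]_(t : n.+1.-tuple {set V}) traj_weight e S' t + \big[Rplus/0]_(t : n.+1.-tuple {set V}) (traj_weight e S' t * Gs e t).
    rewrite sum_mulr -big_split /=; apply: eq_bigr => t _; rewrite hG; ring.
  rewrite h1; lra.
have hsum := Khat_sum esym eirr hdeg hS0.
transitivity (\big[Rplus/0]_S' (esp_Khat e S0 S' * \big[Rplus/0]_(t : n.+1.-tuple {set V}) (traj_weight e S' t * Gs e (cons_tuple S0 t))) - (\big[Rplus/0]_S' esp_Khat e S0 S') * gq e S0).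
  elim/big_rec3: _ => [|i y1 y2 y3 _ ->]; ring.
rewrite hsum; ring.
Qed.

Lemma sum_nat_lb (F : nat -> R) m (n : nat) :
  (forall j : nat, (j < n)%nat -> m <= F j) -> INR n * m <= \big[Rplus/0]_(0 <= j < n) F j.
Proof.
elim: n => [|n IH] h; first by rewrite big_geq //= Rmult_0_l; apply: Rle_refl.
have E : \big[Rplus/0]_(0 <= j < n.+1) F j = \big[Rplus/0]_(0 <= j < n) F j + F n.
  by rewrite big_nat_recr.
rewrite E S_INR.
have := IH (fun j hj => h j (ltnW hj)); have := h n (ltnSn n); rewrite Rmult_plus_distr_r Rmult_1_l; lra.
Qed.

Lemma traj_weight_nonneg (V : finType) (e : rel V) S0 n (s : n.-tuple {set V}) :
  0 <= traj_weight e S0 s.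
Proof.
rewrite /traj_weight; apply: Rmult_le_pos; first by case: ifP => _; lra.
elim/big_ind: _ => [|x y hx hy|i _]; [lra|exact: Rmult_le_pos|exact: Khat_nonneg].
Qed.

Lemma vol_ge_deg (V : finType) (e : rel V) (S : {set V}) x : x \in S -> INR (deg e x) <= vol e S.
Proof.
move=> hx.
have -> : vol e S = INR (deg e x) + \big[Rplus/0]_(i in S | i != x) INR (deg e i).
  by rewrite /vol (bigD1 x hx).
have : 0 <= \big[Rplus/0]_(i in S | i != x) INR (deg e i) by apply: sum_nonneg => i _; apply: pos_INR.
lra.
Qed.

Theorem corollary1 (V : finType) (e : rel V)
    (esym : symmetric e) (eirr : irreflexive e)
    (hdeg : forall x : V, leq 1 (deg e x))
    (S0 : {set V}) (hS0 : S0 != set0)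
    (T : nat) (hT : leq 1 T) (c : R) (hc : 0 < c) :
  esp_hit_prob e S0 T (sqrt c * theta e T) >= 1 - / c.
Proof.
have deg1 : forall x, 1 <= INR (deg e x).
  move=> x; have := hdeg x; move/leP => h; apply: (le_INR 1); exact: h.
case/set0Pn: hS0 => x0 hx0.
have hvS0 : 1 <= vol e S0 := (Rle_trans _ _ _ (deg1 x0) (vol_ge_deg e hx0)).
have hvS0' : 0 < vol e S0 by lra.
have lnS0 : 0 <= ln (vol e S0).
  rewrite -ln_1; have [h|h] := Rle_lt_or_eq_dec _ _ hvS0.
    by apply: Rlt_le; apply: ln_increasing => //; lra.
  by rewrite h; apply: Rle_refl.
set L := ln (vol e setT).
have hL : 0 < L.
  have : (0 < deg e x0)%nat := hdeg x0.
  rewrite /deg card_gt0; case/set0Pn => y; rewrite inE => hxy.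
  have yx : y != x0 by apply/negP => /eqP hy; rewrite hy eirr in hxy.
  have h2 : INR (deg e x0) + INR (deg e y) <= vol e setT.
    have -> : vol e setT = INR (deg e x0) + (INR (deg e y) + \big[Rplus/0]_(i in [set: V] | (i != x0) && (i != y)) INR (deg e i)).
      rewrite /vol (bigD1 x0) // (bigD1 y) /=; last by rewrite inE yx.
      congr (_ + (_ + _)); apply: eq_bigl => i; rewrite !inE andbC //.
    have : 0 <= \big[Rplus/0]_(i in [set: V] | (i != x0) && (i != y)) INR (deg e i).
      by apply: sum_nonneg => i _; apply: pos_INR.
    lra.
  rewrite /L -ln_1; apply: ln_increasing; first lra.
  have := deg1 x0; have := deg1 y; lra.
case: T hT => [//|n] _.
have [hm hG] := traj esym eirr hdeg n hvS0'.
rewrite /esp_hit_prob.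
set a := sqrt c * theta e n.+1.
have Wnn := traj_weight_nonneg e S0 (n := n.+1).
have [hc1|hc1] := Rle_lt_dec c 1.
  have : 0 <= \big[Rplus/0]_(s : n.+1.-tuple {set V}) (if [exists i : 'I_n.+1, Rleb (cond e (nth set0 s i)) a] then traj_weight e S0 s else 0).
    apply: sum_nonneg => s _; case: ifP => _; [exact: Wnn|lra].
  have : 1 <= / c.
    rewrite -Rinv_1; apply: Rinv_le_contravar => //.
  lra.
set B := \big[Rplus/0]_(s : n.+1.-tuple {set V}) (if [exists i : 'I_n.+1, Rleb (cond e (nth set0 s i)) a] then 0 else traj_weight e S0 s).
have split1 : \big[Rplus/0]_(s : n.+1.-tuple {set V}) (if [exists i : 'I_n.+1, Rleb (cond e (nth set0 s i)) a] then traj_weight e S0 s else 0) = 1 - B.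
  rewrite -hm /B; elim/big_rec3: _ => [|s y1 y2 y3 _ ->]; [ring|case: ifP => _; ring].
have a0 : 0 <= a by apply: Rmult_le_pos; apply: sqrt_pos.
have a2 : a * a = c * (4 * / INR n.+1 * L).
  have hT0 : 0 < INR n.+1 by apply: lt_0_INR; apply/ltP.
  rewrite /a /theta -/L.
  have e1 : sqrt c * sqrt (4 * / INR n.+1 * L) * (sqrt c * sqrt (4 * / INR n.+1 * L))
    = (sqrt c * sqrt c) * (sqrt (4 * / INR n.+1 * L) * sqrt (4 * / INR n.+1 * L)) by ring.
  rewrite e1 !sqrt_sqrt //; try lra.
  apply: Rmult_le_pos; last lra.
  apply: Rmult_le_pos; [lra|apply: Rlt_le; exact: Rinv_0_lt_compat].
have key : forall s : n.+1.-tuple {set V},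
  (if [exists i : 'I_n.+1, Rleb (cond e (nth set0 s i)) a] then 0 else traj_weight e S0 s) * (c * L)
  <= traj_weight e S0 s * Gs e s.
  move=> s; have Gnn : 0 <= Gs e s.
    apply: sum_nonneg => j _; rewrite /gq; have := Rle_0_sqr (cond e (nth set0 s j)); rewrite /Rsqr; lra.
  case: ifP => hex.
    rewrite Rmult_0_l; apply: Rmult_le_pos => //.
  apply: Rmult_le_compat_l => //.
  have hall : forall j, (j < n.+1)%nat -> a * a / 4 <= gq e (nth set0 s j).
    move=> j hj.
    have := negbT hex; move/existsPn => /(_ (Ordinal hj)) /=.
    rewrite /Rleb; case: Rle_dec => // hn _.
    have hlt : a < cond e (nth set0 s j) by apply: Rnot_le_lt.
    rewrite /gq.
    have : a * a <= cond e (nth set0 s j) * cond e (nth set0 s j) by apply: Rmult_le_compat; lra.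
    lra.
  have := sum_nat_lb hall; rewrite -/(Gs e s) a2.
  have hT0 : 0 < INR n.+1 by apply: lt_0_INR; apply/ltP.
  have -> : INR n.+1 * (c * (4 * / INR n.+1 * L) / 4) = c * L by field; lra.
  by [].
have hB : B * (c * L) <= L.
  rewrite /B sum_mull.
  apply: (Rle_trans _ (\big[Rplus/0]_(s : n.+1.-tuple {set V}) (traj_weight e S0 s * Gs e s))).
    by apply: sum_le => s _; exact: key s.
  have := hG; rewrite -/L; lra.
rewrite split1.
have : B <= / c.
  have hcL : 0 < c * L by apply: Rmult_lt_0_compat.
  apply: (Rmult_le_reg_r (c * L)) => //.
  have -> : / c * (c * L) = L by field; lra.
  exact: hB.
lra.
Qed.
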